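(* For $n\ge 2$, let $S_n$ denote the bitsum (number of $1$s) of a bimultus bitstring of length $n$ chosen uniformly at random among all bimultus bitstrings of length $n$. Then \[ \lim_{n\to\infty}\frac{\mathbb{E}(S_n)}{n}=\frac12, \qquad \lim_{n\to\infty}\frac{\mathbb{V}(S_n)}{n}=\frac{5+3\sqrt{5}}{40}=0.2927050983\ldots \]
   Context: A finite bitstring (a finite word over $\{0,1\}$) is called bimultus if each of its $1$s has at least one neighboring (adjacent) $1$ and each of its $0$s has at least one neighboring $0$; equivalently, it contains neither an isolated $1$ nor an isolated $0$. Bimultus bitstrings of length $n$ exist for every $n\ge 2$ (e.g. $0\cdots0$). $\mathbb{E}$ and $\mathbb{V}$ denote expectation and variance with respect to the uniform distribution on bimultus bitstrings of length $n$. *)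

(* Defs.v *)
From HB Require Import structures.
From mathcomp Require Import all_boot all_order all_algebra.
From mathcomp Require Import all_classical all_reals all_analysis.
Set Implicit Arguments. Unset Strict Implicit. Unset Printing Implicit Defensive.
Import Order.TTheory GRing.Theory Num.Theory.
Local Open Scope ring_scope.

Definition has_equal_neighbor (s : seq bool) (i : nat) : bool :=
  ((0 < i)%N && (nth false s i.-1 == nth false s i)) ||
  ((i.+1 < size s)%N && (nth false s i.+1 == nth false s i)).

Definition bimultus (s : seq bool) : bool :=
  all (has_equal_neighbor s) (iota 0 (size s)).

Definition bimultus_set (n : nat) : {set n.-tuple bool} :=
  [set t : n.-tuple bool | bimultus t].

Definition bitsum (s : seq bool) : nat := count id s.

Definition ES (R : realType) (n : nat) : R :=
  (\sum_(t in bimultus_set n) (bitsum t)%:R) / #|bimultus_set n|%:R.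

Definition VS (R : realType) (n : nat) : R :=
  (\sum_(t in bimultus_set n) ((bitsum t)%:R - ES R n) ^+ 2)
    / #|bimultus_set n|%:R.

(* Main.v *)
Require Import Defs.
From HB Require Import structures.
From mathcomp Require Import all_boot all_order all_algebra.
From mathcomp Require Import all_classical all_reals all_analysis.
From mathcomp Require Import ring lra.
Import Order.TTheory GRing.Theory Num.Theory.
Import numFieldNormedType.Exports.
Local Open Scope classical_set_scope.
Local Open Scope ring_scope.

Fixpoint okF (p : option bool) (s : seq bool) : bool :=
  match s with
  | [::] => true
  | x :: s' => ((p == Some x) || (ohead s' == Some x)) && okF (Some x) s'
  end.

Fixpoint good (b sat : bool) (s : seq bool) : bool :=
  match s with
  | [::] => sat
  | c :: t => if c == b then good b true t else sat && good c false t
  end.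

Lemma good_okF s : forall b sat, good b sat s = (sat || (ohead s == Some b)) && okF (Some b) s.
Proof.
elim: s => [|x s IH] b sat /=; first by rewrite orbF andbT.
by rewrite !IH; case: x; case: b; case: sat => //=; rewrite ?andbT ?orbF ?andbF.
Qed.

Lemma hen_cons p s i : (0 < i)%N ->
  has_equal_neighbor (p :: s) i.+1 = has_equal_neighbor s i.
Proof. by case: i => [|i] //= _; rewrite /has_equal_neighbor /=. Qed.

Lemma all_hen_okF s : forall p,
  all (has_equal_neighbor (p :: s)) (iota 1 (size s)) = okF (Some p) s.
Proof.
elim: s => [|x s IH] p //=.
rewrite -IH; congr andb.
  rewrite /has_equal_neighbor /=; case: s {IH} => [|y s] /=; rewrite ?orbF.
    by [].
  by case: p; case: x; case: y.
rewrite -[2%N]/(1 + 1)%N iotaDl all_map; apply: eq_in_all => i.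
by rewrite mem_iota => /andP[hi _] /=; rewrite add1n hen_cons.
Qed.

Lemma bimultus_cons c t : bimultus (c :: t) = good c false t.
Proof.
rewrite /bimultus /= all_hen_okF good_okF /=; congr andb.
by rewrite /has_equal_neighbor /=; case: t => [|y t] //=.
Qed.
Lemma sum_tupleS (V : nmodType) m (f : seq bool -> V) :
  \sum_(t : m.+1.-tuple bool) f t = \sum_(c : bool) \sum_(t : m.-tuple bool) f (c :: t).
Proof.
rewrite pair_big /=.
rewrite (reindex (fun p : bool * m.-tuple bool => [tuple of p.1 :: p.2])) //=.
exists (fun t : m.+1.-tuple bool => (thead t, [tuple of behead t])).
  by move=> [c t] _; congr pair; apply: val_inj.
by move=> t _; apply: val_inj => /=; case/tupleP: t.
Qed.

Section S.
Variable R : realType.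

Definition e (c : bool) : R := if c then 1 else -1.
Arguments e : simpl never.
Definition w (s : seq bool) : R := \sum_(c <- s) e c.
Lemma w_cons c s : w (c :: s) = e c + w s.
Proof. by rewrite /w big_cons. Qed.
Lemma w_nil : w [::] = 0.
Proof. by rewrite /w big_nil. Qed.

Definition Sg (g : seq bool -> bool) k m :=
  \sum_(t : m.-tuple bool) (if g t then w t ^+ k else 0).

Lemma Sx0 g m x : \sum_(t : m.-tuple bool) (if g (tval t) then (x + w t) ^+ 0 else 0) = Sg g 0 m.
Proof. by []. Qed.
Lemma Sx1 g m x : \sum_(t : m.-tuple bool) (if g (tval t) then (x + w t) ^+ 1 else 0) =
  x * Sg g 0 m + Sg g 1 m.
Proof.
rewrite /Sg mulr_sumr -big_split /=; apply: eq_bigr => t _.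
by case: (g t); rewrite ?mulr0 ?addr0 // expr0 expr1 mulr1.
Qed.
Lemma Sx2 g m x : \sum_(t : m.-tuple bool) (if g (tval t) then (x + w t) ^+ 2 else 0) =
  Sg g 2 m + 2 * x * Sg g 1 m + x ^+ 2 * Sg g 0 m.
Proof.
rewrite /Sg !mulr_sumr -!big_split /=; apply: eq_bigr => t _.
by case: (g t); rewrite ?mulr0 ?addr0 //; ring.
Qed.
Lemma Sfalse m (F : m.-tuple bool -> R) : \sum_(t : m.-tuple bool) (if false then F t else 0) = 0.
Proof. by rewrite big1. Qed.

Definition S k b sat m := Sg (good b sat) k m.

Lemma S_step k b sat m : S k b sat m.+1 =
  \sum_(c : bool) \sum_(t : m.-tuple bool)
     (if good b sat (c :: t) then (e c + w t) ^+ k else 0).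
Proof. by rewrite /S /Sg (@sum_tupleS R m (fun s => if good b sat s then w s ^+ k else 0)); apply: eq_bigr => c _; apply: eq_bigr => t _; rewrite w_cons. Qed.

Fixpoint fib (n : nat) : R :=
  match n with 0%N => 0 | 1%N => 1 | (k.+1 as k1).+1 => fib k1 + fib k end.
Fixpoint per (n : nat) : R :=
  match n with 0%N => 1 | 1%N => 1 | (k.+1 as k1).+1 => per k1 - per k end.
Lemma fibSS n : fib n.+2 = fib n.+1 + fib n. Proof. by []. Qed.
Lemma perSS n : per n.+2 = per n.+1 - per n. Proof. by []. Qed.
Lemma fib0 : fib 0 = 0. Proof. by []. Qed.
Lemma fib1 : fib 1 = 1. Proof. by []. Qed.
Lemma per0 : per 0 = 1. Proof. by []. Qed.
Lemma per1 : per 1 = 1. Proof. by []. Qed.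
Arguments fib : simpl never.
Arguments per : simpl never.

Definition sg (b : bool) : R := if b then -1 else 1.
Definition CF k b sat m : R :=
  match k with
  | 0%N => if sat then fib m.+1 else fib m
  | 1%N => sg b * (if sat then (fib m.+1 - fib m - 2 * per m + per m.+1) / 2
                   else (- fib m.+1 - per m + 2 * per m.+1) / 2)
  | 2%N => if sat then (8 * m%:R * fib m.+1 + 6 * m%:R * fib m + 20 * fib m.+1 + fib m
                        - 25 * per m + 5 * per m.+1) / 10
           else (6 * m%:R * fib m.+1 + 2 * m%:R * fib m + 5 * fib m.+1 + 7 * fib m
                        - 10 * per m + 5 * per m.+1) / 10
  | _ => 0
  end.

Lemma S_closed m : forall k b sat, (k < 3)%N -> S k b sat m = CF k b sat m.
Proof.
elim: m => [|m IH] k b sat hk.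
  rewrite /S /Sg (big_pred1 [tuple]); last first.
    by move=> t; rewrite [t]tuple0 /= eqxx.
  rewrite /= w_nil.
  case: k hk => [|[|[|]]] // _; case: sat; rewrite /CF /= ?fib0 ?fib1 ?per0 ?per1; by field.

rewrite S_step big_bool /=.
case: k hk => [|[|[|]]] // _; case: b; case: sat; rewrite /= ?big1_eq ?Sx0 ?Sx1 ?Sx2.
all: rewrite -?/(S _ _ _ _) ?IH //.
all: rewrite /CF /e /sg ?fibSS ?perSS -?natr1.
all: try (by field).
Qed.

Lemma sum_bim m (f : seq bool -> R) :
  \sum_(t in bimultus_set m.+1) f t =
  \sum_(c : bool) \sum_(t : m.-tuple bool) (if good c false t then f (c :: t) else 0).
Proof.
rewrite big_mkcond /=.
under eq_bigr do rewrite /bimultus_set inE.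
rewrite (@sum_tupleS R m (fun s => if bimultus s then f s else 0)).
by apply: eq_bigr => c _; apply: eq_bigr => t _; rewrite bimultus_cons.
Qed.

Lemma Spoly g m a0 a1 a2 :
  \sum_(t : m.-tuple bool) (if g (tval t) then a0 + a1 * w t + a2 * w t ^+ 2 else 0) =
  a0 * Sg g 0 m + a1 * Sg g 1 m + a2 * Sg g 2 m.
Proof.
rewrite /Sg !mulr_sumr -!big_split /=; apply: eq_bigr => t _.
by case: (g t); rewrite ?mulr0 ?addr0 // expr0 expr1 mulr1.
Qed.

Lemma bitsumE s : (bitsum s)%:R = ((size s)%:R + w s) / 2 :> R.
Proof.
elim: s => [|c s IH]; first by rewrite /bitsum /= w_nil; field.
rewrite /bitsum /= natrD -/(bitsum s) IH w_cons -natr1 /e.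
by case: c => /=; field.
Qed.

Lemma card_bim m : #|bimultus_set m.+1|%:R = 2 * fib m :> R.
Proof.
rewrite -sumr_const (sum_bim m (fun _ => 1)) big_bool.
have E c : \sum_(t : m.-tuple bool) (if good c false t then (1 : R) else 0) = S 0 c false m.
  by apply: eq_bigr => t _.
by rewrite !E !S_closed //= /CF; ring.
Qed.

Lemma sumB m : \sum_(t in bimultus_set m.+1) ((bitsum t)%:R : R) = m.+1%:R * fib m.
Proof.
rewrite (sum_bim m (fun s => (bitsum s)%:R)) big_bool.
have E c : \sum_(t : m.-tuple bool) (if good c false t then ((bitsum (c :: t))%:R : R) else 0) =
   \sum_(t : m.-tuple bool) (if good c false t then
       (m.+1%:R + e c) / 2 + 1 / 2 * w t + 0 * w t ^+ 2 else 0).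
  apply: eq_bigr => t _; case: (good c false t) => //.
  rewrite bitsumE /= size_tuple w_cons -natr1; by field.
rewrite !E !Spoly -!/(S _ _ _ _) !S_closed //= /CF /e /sg; by field.
Qed.

Lemma sumV m : \sum_(t in bimultus_set m.+1) ((bitsum t)%:R - m.+1%:R / 2 : R) ^+ 2 =
  (6 * m%:R * fib m.+1 + 2 * m%:R * fib m + 15 * fib m.+1 + 17 * fib m - 15 * per m.+1) / 20.
Proof.
rewrite (sum_bim m (fun s => ((bitsum s)%:R - m.+1%:R / 2) ^+ 2)) big_bool.
have E c : \sum_(t : m.-tuple bool) (if good c false t then
     ((bitsum (c :: t))%:R - m.+1%:R / 2 : R) ^+ 2 else 0) =
   \sum_(t : m.-tuple bool) (if good c false t then
       e c ^+ 2 / 4 + e c / 2 * w t + 1 / 4 * w t ^+ 2 else 0).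
  apply: eq_bigr => t _; case: (good c false t) => //.
  rewrite bitsumE /= size_tuple w_cons -natr1; by field.
rewrite !E !Spoly -!/(S _ _ _ _) !S_closed //= /CF /e /sg; by field.
Qed.

Lemma fib_facts m : [/\ 1 <= fib m.+1, 1 <= fib m.+2, m.+1%:R <= 2 * fib m.+1
   & m.+2%:R <= 2 * fib m.+2].
Proof.
elim: m => [|m [h1 h2 h3 h4]].
  by rewrite fibSS fib1 fib0; split; lra.
rewrite [fib m.+3]fibSS; split => //; first lra.
have hm := ler0n R m; rewrite -!natr1 in h3 h4 *; lra.
Qed.

Lemma fib_ge0 m : 0 <= fib m.
Proof. by case: m => [|m]; [rewrite fib0 | case: (fib_facts m) => h _ _ _; lra]. Qed.

Lemma fib_le2 m : fib m.+2 <= 2 * fib m.+1.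
Proof.
rewrite fibSS; case: m => [|m]; first by rewrite fib0 fib1; lra.
have := fib_ge0 m; rewrite (fibSS m) => h; have := fib_ge0 m.+1; lra.
Qed.

Definition perinv (x y : R) : Prop :=
  (x = 1 /\ y = 1) \/ (x = 1 /\ y = 0) \/ (x = 0 /\ y = -1) \/
  (x = -1 /\ y = -1) \/ (x = -1 /\ y = 0) \/ (x = 0 /\ y = 1).

Lemma per_inv n : perinv (per n) (per n.+1).
Proof.
elim: n => [|n IH]; first by left; rewrite per0 per1.
rewrite /perinv perSS; case: IH => [[-> ->]|[[-> ->]|[[-> ->]|[[-> ->]|[[-> ->]|[-> ->]]]]]];
  rewrite /perinv; lra.
Qed.

Lemma per_bound n : -1 <= per n <= 1.
Proof.
case: (per_inv n) => [[-> _]|[[-> _]|[[-> _]|[[-> _]|[[-> _]|[-> _]]]]]]; apply/andP; split; lra.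
Qed.

Definition phi : R := (1 + Num.sqrt 5) / 2.

Lemma sqrt5_facts : [/\ Num.sqrt 5 ^+ 2 = 5 :> R, 2 <= Num.sqrt 5 :> R & Num.sqrt 5 <= 3 :> R].
Proof.
have h : Num.sqrt 5 ^+ 2 = 5 :> R by rewrite sqr_sqrtr // ler0n.
have h0 : 0 <= Num.sqrt 5 :> R by exact: sqrtr_ge0.
split => //; rewrite expr2 in h; nra.
Qed.

Lemma golden m : -1 <= fib m.+1 - phi * fib m <= 1.
Proof.
have [h5 h2 h3] := sqrt5_facts; rewrite expr2 in h5.
elim: m => [|m /andP[ih1 ih2]]; first by rewrite fib1 fib0 mulr0 subr0; apply/andP; split; lra.
have -> : fib m.+2 - phi * fib m.+1 = (1 - phi) * (fib m.+1 - phi * fib m).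
  apply/eqP; rewrite -subr_eq0; apply/eqP.
  have -> : fib m.+2 - phi * fib m.+1 - (1 - phi) * (fib m.+1 - phi * fib m) =
     fib m * (5 - Num.sqrt 5 * Num.sqrt 5) / 4 by rewrite fibSS /phi; field.
  by rewrite h5 subrr mulr0 mul0r.
move: ih1 ih2; rewrite /phi => ih1 ih2.
apply/andP; split; nra.
Qed.

Lemma ES_val m : (1 <= m)%N -> ES R m.+1 = m.+1%:R / 2.
Proof.
case: m => [//|k] _.
have [h1 _ _ _] := fib_facts k.
rewrite /ES sumB card_bim; field.
by rewrite gt_eqF //; lra.
Qed.

Lemma VS_val m : (1 <= m)%N -> VS R m.+1 =
  (6 * m%:R * fib m.+1 + 2 * m%:R * fib m + 15 * fib m.+1 + 17 * fib m - 15 * per m.+1) / 20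
  / (2 * fib m).
Proof. by move=> hm; rewrite /VS ES_val // sumV card_bim. Qed.

Lemma VS_bound m : (1 <= m)%N ->
  `|(5 + 3 * Num.sqrt 5) / 40 - VS R m.+1 / m.+1%:R| <= 3 / m.+1%:R.
Proof.
move=> hm; rewrite VS_val //.
have [hF0 hmF hF1] : [/\ 1 <= fib m, m%:R <= 2 * fib m & fib m.+1 <= 2 * fib m].
  by case: m hm => // k _; case: (fib_facts k) => h1 _ h3 _; split => //; exact: fib_le2.
have hF1' : 0 <= fib m.+1 := fib_ge0 _.
have /andP[hx1 hx2] := golden m.
have /andP[hp1 hp2] := per_bound m.+1.
have [_ hs2 hs3] := sqrt5_facts.
have hm0 : 0 <= m%:R :> R := ler0n R m.
have hD : 0 < 40 * (m%:R + 1) * fib m by apply: mulr_gt0; [nra | lra].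
rewrite -[m.+1%:R]natr1.
have -> : (5 + 3 * Num.sqrt 5) / 40 -
   (6 * m%:R * fib m.+1 + 2 * m%:R * fib m + 15 * fib m.+1 + 17 * fib m - 15 * per m.+1) / 20 /
   (2 * fib m) / (m%:R + 1) =
   - (6 * m%:R * (fib m.+1 - phi * fib m) + 15 * fib m.+1 + (15 - 6 * phi) * fib m
       - 15 * per m.+1) * (40 * (m%:R + 1) * fib m)^-1.
  rewrite /phi; field.
  apply/andP; split; rewrite gt_eqF //; lra.
have -> : 3 / (m%:R + 1) = 120 * fib m * (40 * (m%:R + 1) * fib m)^-1.
  field; apply/andP; split; rewrite gt_eqF //; lra.
have hDi : 0 <= (40 * (m%:R + 1) * fib m)^-1 by rewrite invr_ge0 ltW.
rewrite normrM normrN (ger0_norm hDi).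
apply: ler_wpM2r => //.
move: hx1 hx2; set x := fib m.+1 - phi * fib m => hx1 hx2.
have hmx : - m%:R <= m%:R * x <= m%:R by apply/andP; split; nra.
have hphi : 0 <= phi * fib m <= 2 * fib m by rewrite /phi; apply/andP; split; nra.
move: hmx hphi => /andP[? ?] /andP[? ?].
rewrite ler_norml; apply/andP; split; lra.
Qed.
End S.

Theorem mainTheorem1 (R : realType) :
  (fun n : nat => ES R n / n%:R) @ \oo --> (1 / 2 : R) /\
  (fun n : nat => VS R n / n%:R) @ \oo --> ((5 + 3 * Num.sqrt 5) / 40 : R).
Proof.
split.
- apply/cvgrPdist_le => eps he; near=> n.
  have hn : (2 <= n)%N by near: n; exact: nbhs_infty_ge.
  have hm : (1 <= n.-1)%N by rewrite -ltnS prednK // (leq_trans _ hn).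
  rewrite /= -(prednK (leq_trans _ hn)) // ES_val //.
  have -> : 1 / 2 - n.-1.+1%:R / 2 / n.-1.+1%:R = 0 :> R.
    by field; rewrite nat1r pnatr_eq0.
  by rewrite normr0 ltW.
- apply/cvgrPdist_le => eps he; near=> n.
  have hn : (2 <= n)%N by near: n; exact: nbhs_infty_ge.
  have hr : 3 / eps <= n%:R by near: n; exact: nbhs_infty_ger.
  have hm : (1 <= n.-1)%N by rewrite -ltnS prednK // (leq_trans _ hn).
  rewrite /= -(prednK (leq_trans _ hn)) // in hr *.
  apply: le_trans (@VS_bound R _ hm) _.
  rewrite ler_pdivrMr ?ltr0Sn //.
  by move: hr; rewrite ler_pdivrMr // mulrC.
Unshelve. all: by end_near.
Qed.
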